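(* Let $A=\mathbb{Z}$ and let $g\in G_a$ be covered by $\widehat g\in\widehat G_a$. Suppose $g$ has a periodic point $x$ of period $q$. Then: (1) $\widehat{\mathrm{rot}}_{x,\alpha}(\widehat g)$ exists and equals $n/q$ for some $n\in\mathbb{Z}$. (2) If the function $y\mapsto\rho_{y,\alpha}(\widehat g)$ is measurable, then there exists a $g$-invariant Borel probability measure $\mu$ on $X$ such that $\widehat{\mathrm{rot}}_{\mu,\alpha}(\widehat g)=n/q$ for some $n\in\mathbb{Z}$.
   Context: $X$ is a path-connected space, $a\in\mathrm{H}^1(X;\mathbb{Z})$, $\pi\colon\widehat X_a\to X$ a principal $\mathbb{Z}$-bundle with holonomy $a$, $T_r$ the action of $r\in\mathbb{Z}$. $\widehat G_a$ is the group of bundle automorphisms of $\widehat X_a$ (homeomorphisms $\widehat g$ with $\pi\circ\widehat g=g\circ\pi$ for a homeomorphism $g$ of $X$, said to cover $g$), and $G_a$ the group of homeomorphisms of $X$ preserving $a$. $\alpha$ is a real singular $1$-cocycle representing $a$, and $\theta\colon\widehat X_a\to\mathbb{R}$ a $0$-cochain with $d\theta=\pi^*\alpha$ and $\theta(T_r\widehat y)=\theta(\widehat y)+r$. For $y\in X$, $\rho_{y,\alpha}(\widehat g)=\theta(\widehat g(\widehat y))-\theta(\widehat y)$ with $\widehat y\in\pi^{-1}(y)$ (independent of choices); $\widehat{\mathrm{rot}}_{y,\alpha}(\widehat g)=\lim_{n\to\infty}\rho_{y,\alpha}(\widehat g^n)/n$ when it exists; for a $g$-invariant Borel probability measure $\mu$,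 $\widehat{\mathrm{rot}}_{\mu,\alpha}(\widehat g)=\int_X\rho_{y,\alpha}(\widehat g)\,d\mu(y)$. *)

(* Defs.v *)
From HB Require Import structures.
From mathcomp Require Import all_boot all_order all_algebra.
From mathcomp Require Import all_classical all_reals all_analysis.

Set Implicit Arguments.
Unset Strict Implicit.
Unset Printing Implicit Defensive.

Import Order.TTheory GRing.Theory Num.Theory.
Import numFieldTopology.Exports numFieldNormedType.Exports.
Local Open Scope classical_set_scope.
Local Open Scope ring_scope.

(* A singular 1-simplex is a map sigma : R -> X which is
   continuous on [0,1] and normalized (constant outside [0,1]), so that
   singular 1-simplices correspond exactly to continuous maps [0,1] -> X.
   The standard 2-simplex is Delta2 = {(s,t) | s,t >= 0, s+t <= 1} with
   vertices v0 = (0,0), v1 = (1,0), v2 = (0,1).                          *)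

Definition clamp01 {R : realType} (t : R) : R := Num.max 0 (Num.min t 1).

Definition sing1 {R : realType} {X : topologicalType} (sigma : R -> X) : Prop :=
  {within `[0, 1], continuous sigma} /\ forall t, sigma t = sigma (clamp01 t).

Definition Delta2 {R : realType} : set (R * R) :=
  [set p | 0 <= p.1 /\ 0 <= p.2 /\ p.1 + p.2 <= 1].

Definition sing2 {R : realType} {X : topologicalType} (tau : R * R -> X) : Prop :=
  {within (@Delta2 R), continuous tau}.

(* faces d0 = [v1,v2], d1 = [v0,v2], d2 = [v0,v1] *)
Definition face0 {R : realType} {X : Type} (tau : R * R -> X) : R -> X :=
  fun t => tau (1 - clamp01 t, clamp01 t).
Definition face1 {R : realType} {X : Type} (tau : R * R -> X) : R -> X :=
  fun t => tau (0, clamp01 t).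
Definition face2 {R : realType} {X : Type} (tau : R * R -> X) : R -> X :=
  fun t => tau (clamp01 t, 0).

(* singular 1-cochains with coefficients in A are functions on singular
   1-simplices; 0-cochains are functions on points.                    *)
Definition cocycle1 {R : realType} {X : topologicalType} {A : zmodType}
  (c : (R -> X) -> A) : Prop :=
  forall tau : R * R -> X, sing2 tau ->
    c (face0 tau) - c (face1 tau) + c (face2 tau) = 0.

Definition cohomologous1 {R : realType} {X : topologicalType} {A : zmodType}
  (c c' : (R -> X) -> A) : Prop :=
  exists b : X -> A, forall sigma : R -> X, sing1 sigma ->
    c' sigma = c sigma + (b (sigma 1) - b (sigma 0)).

Definition path_connected {R : realType} (X : topologicalType) : Prop :=
  forall x y : X, exists gamma : R -> X, sing1 gamma /\ gamma 0 = x /\ gamma 1 = y.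

Definition homeomorphism {X : topologicalType} (f : X -> X) : Prop :=
  continuous f /\ exists f' : X -> X, [/\ cancel f f', cancel f' f & continuous f'].

Definition Z_action {Xh : topologicalType} (T : int -> Xh -> Xh) : Prop :=
  [/\ forall z, T 0 z = z,
      forall (r s : int) z, T (r + s) z = T r (T s z)
    & forall r, continuous (T r)].

(* local triviality: every x has an open neighborhood U and an open V in Xh
   mapped homeomorphically onto U by pi (with inverse the local section s),
   such that pi^-1(U) is the union of the translates T r V; hence
   pi^-1(U) is equivariantly homeomorphic to U x Z.                     *)
Definition locally_trivial {X Xh : topologicalType} (pi : Xh -> X)
  (T : int -> Xh -> Xh) : Prop :=
  forall x : X, exists (U : set X) (V : set Xh) (s : X -> Xh),
    [/\ open U /\ U x, open V, {within U, continuous s},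
        (forall y, U y -> V (s y) /\ pi (s y) = y) /\
        (forall z, V z -> U (pi z) /\ s (pi z) = z)
      & (forall z, U (pi z) -> exists r, V (T r z))].

Definition principal_Z_bundle {X Xh : topologicalType} (pi : Xh -> X)
  (T : int -> Xh -> Xh) : Prop :=
  [/\ continuous pi /\ Z_action T,
      (forall r z, pi (T r z) = pi z),
      (forall z z', pi z = pi z' -> exists r, z' = T r z),
      (forall r z, T r z = z -> r = 0)
    & locally_trivial pi T].

(* the holonomy of the bundle is the class of the integral cocycle c:
   lifting a loop gamma, the endpoint is the start translated by c(gamma) *)
Definition has_holonomy {R : realType} {X Xh : topologicalType} (pi : Xh -> X)
  (T : int -> Xh -> Xh) (c : (R -> X) -> int) : Prop :=
  forall (gamma : R -> X) (gammah : R -> Xh),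
    sing1 gamma -> gamma 0 = gamma 1 -> sing1 gammah -> pi \o gammah = gamma ->
    gammah 1 = T (c gamma) (gammah 0).

Definition in_Ga {R : realType} {X : topologicalType} (c : (R -> X) -> int)
  (g : X -> X) : Prop :=
  homeomorphism g /\ cohomologous1 c (fun sigma => c (g \o sigma)).

Definition covers {X Xh : topologicalType} (pi : Xh -> X) (T : int -> Xh -> Xh)
  (gh : Xh -> Xh) (g : X -> X) : Prop :=
  [/\ homeomorphism gh, pi \o gh = g \o pi & forall r z, gh (T r z) = T r (gh z)].

Definition rho {R : realType} {X Xh : Type} (theta : Xh -> R) (pi : Xh -> X)
  (gh : Xh -> Xh) (y : X) : R :=
  match pselect (exists z, pi z = y) with
  | left h => theta (gh (proj1_sig (cid h))) - theta (proj1_sig (cid h))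
  | right _ => 0
  end.

Definition borel (X : ptopologicalType) := g_sigma_algebraType (@open X).

(* Main.v *)
Require Import Defs.
From HB Require Import structures.
From mathcomp Require Import all_boot all_order all_algebra.
From mathcomp Require Import all_classical all_reals all_analysis.
From mathcomp Require Import measurable_realfun.
From mathcomp Require Import ring lra.

Import Order.TTheory GRing.Theory Num.Theory.
Import numFieldTopology.Exports numFieldNormedType.Exports.
Local Open Scope classical_set_scope.
Local Open Scope ring_scope.
Section helper.
Context d (T : measurableType d) (R : realType).

Lemma int_dsum (pts : nat -> T) (N : nat) (f : T -> \bar R) :
  measurable_fun [set: T] f -> (forall y, 0 <= f y)%E ->
  (\int[msum (fun i => \d_(pts i)) N]_y f y = \sum_(i < N) f (pts i))%E.
Proof.
move=> mf f0; rewrite ge0_integral_measure_sum//; apply: eq_bigr => i _.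
by rewrite integral_dirac// diracT mul1e.
Qed.

Lemma int_dsumR (pts : nat -> T) (N : nat) (f : T -> R) :
  measurable_fun [set: T] f ->
  (\int[msum (fun i => \d_(pts i)) N]_y (f y)%:E = (\sum_(i < N) f (pts i))%:E)%E.
Proof.
move=> mf; have mfE : measurable_fun setT (EFin \o f) by exact/measurable_EFinP.
rewrite integralE !int_dsum//.
2,3: by [exact: measurable_funeneg | exact: measurable_funepos].
rewrite (funerpos f) (funerneg f) /= sumEFin sumEFin -EFinB -sumrB.
congr EFin; apply: eq_bigr => i _.
by rewrite -[in RHS](funrposBneg f).
Qed.


Lemma int_sdsum (k : {nonneg R}) (pts : nat -> T) (N : nat) (f : T -> R) :
  measurable_fun [set: T] f ->
  (\int[mscale k (msum (fun i => \d_(pts i)) N)]_y (f y)%:E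
     = (k%:num * \sum_(i < N) f (pts i))%:E)%E.
Proof.
move=> mf; have mfE : measurable_fun [set: T] (EFin \o f) by exact/measurable_EFinP.
rewrite integralE !ge0_integral_mscale// ?int_dsum//; try by [exact: measurable_funeneg | exact: measurable_funepos | move=> y; exact: funeneg_ge0 | move=> y; exact: funepos_ge0].
rewrite (funerpos f) (funerneg f) /= sumEFin sumEFin -!EFinM -EFinB -mulrBr -sumrB.
congr (EFin (_ * _)); apply: eq_bigr => i _.
by rewrite -[in RHS](funrposBneg f).
Qed.

Lemma int_sdsum_abs (k : {nonneg R}) (pts : nat -> T) (N : nat) (f : T -> R) :
  measurable_fun [set: T] f ->
  (\int[mscale k (msum (fun i => \d_(pts i)) N)]_y `|(f y)%:E|
     = (k%:num * \sum_(i < N) `|f (pts i)|)%:E)%E.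
Proof.
move=> mf; have mfE : measurable_fun [set: T] (EFin \o f) by exact/measurable_EFinP.
rewrite ge0_integral_mscale//; last first.
  exact: measurableT_comp.
rewrite int_dsum//; last exact: measurableT_comp.
by rewrite sumEFin -EFinM.
Qed.

End helper.
Local Open Scope ring_scope.

Lemma part2 (R : realType) (X : ptopologicalType) (g : X -> X) (x : X) (q : nat)
  (f : X -> R) (n : int) :
  (0 < q)%N -> iter q g x = x -> measurable_fun [set: borel X] (f : borel X -> R) ->
  \sum_(i < q) f (iter i g x) = n%:~R ->
   exists mu : probability (borel X) R,
     (forall A : set (borel X), measurable A -> mu (g @^-1` A) = mu A) /\
     exists n : int,
       mu.-integrable [set: borel X] (fun y => (f y)%:E) /\
       (\int[mu]_y (f y)%:E = ((n%:~R / q%:R : R))%:E)%E.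
Proof.
move=> q0 gq mf hs.
pose pts i : borel X := iter i g x.
pose ms := msum (fun i => @dirac _ (borel X) (pts i) R) q.
have msT : ms setT = (q%:R)%:E.
  rewrite /ms /msum /= (eq_bigr (fun _ => 1%E)); last by move=> i _; rewrite diracT.
  by rewrite sumEFin sumr_const card_ord.
have k0 : (0 : R) <= q%:R^-1 by rewrite invr_ge0.
pose k := NngNum k0.
pose mu := mnormalize ms (@dirac _ (borel X) x R).
have muE A : mu A = mscale k ms A.
  have qn0 : (q == 0%N) = false by case: (q) q0.
  rewrite /mu /mnormalize /= -/ms msT eqe pnatr_eq0 qn0 /= /mscale /=.
  by rewrite muleC.
exists mu; split.
  move=> A _; apply: (etrans (muE _)); apply: esym; apply: (etrans (muE _)); rewrite /mscale /=; congr (_ * _)%E.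
  have e1 (i : nat) : \d_(pts i) (g @^-1` A) = (((pts i.+1 \in A)%:R : R))%:E.
    by rewrite diracE.
  rewrite /msum [RHS](eq_bigr (fun i : 'I_q => ((pts i.+1 \in A)%:R : R)%:E)); last by move=> i _; exact: e1.
  rewrite [LHS](eq_bigr (fun i : 'I_q => ((pts i \in A)%:R : R)%:E)); last by move=> i _; exact: diracE.
  rewrite !sumEFin; congr EFin.
  case: (q) q0 gq => // q' _ gq.
  rewrite big_ord_recl big_ord_recr /= addrC; congr (_ + _).
by rewrite -[g (pts q')]/(iter q'.+1 g x) gq.
exists n; split.
  apply/integrableP; split; first exact/measurable_EFinP.
  rewrite (eq_measure_integral (mscale k ms)); last by move=> A _ _; exact: muE.
  by rewrite int_sdsum_abs// ltry.
rewrite (eq_measure_integral (mscale k ms)); last by move=> A _ _; exact: muE.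
by rewrite int_sdsum// hs /= mulrC.
Qed.
Theorem proposition2p9 (R : realType) (X : ptopologicalType) (Xh : topologicalType)
  (c : (R -> X) -> int) (alpha : (R -> X) -> R)
  (pi : Xh -> X) (T : int -> Xh -> Xh) (theta : Xh -> R)
  (g : X -> X) (gh : Xh -> Xh) (x : X) (q : nat) :
  path_connected (R := R) X ->
  cocycle1 c ->
  principal_Z_bundle pi T ->
  has_holonomy pi T c ->
  cocycle1 alpha ->
  cohomologous1 (fun sigma => (c sigma)%:~R) alpha ->
  (forall sigmah : R -> Xh, sing1 sigmah ->
     theta (sigmah 1) - theta (sigmah 0) = alpha (pi \o sigmah)) ->
  (forall (r : int) (z : Xh), theta (T r z) = theta z + r%:~R) ->
  in_Ga c g ->
  covers pi T gh g ->
  (0 < q)%N -> iter q g x = x -> (forall k, (0 < k < q)%N -> iter k g x <> x) ->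
  (exists n : int,
     (fun k : nat => rho theta pi (iter k gh) x / k%:R) @ \oo --> (n%:~R / q%:R : R))
  /\
  (measurable_fun [set: borel X] (rho theta pi gh : borel X -> R) ->
   exists mu : probability (borel X) R,
     (forall A : set (borel X), measurable A -> mu (g @^-1` A) = mu A) /\
     exists n : int,
       mu.-integrable [set: borel X] (fun y => (rho theta pi gh y)%:E) /\
       (\int[mu]_y (rho theta pi gh y)%:E = ((n%:~R / q%:R : R))%:E)%E).
Proof.
move=> _ _ [[_ [T0 TD _]] _ fib _ _] _ _ _ _ Tsh _ [_ pigh ghT] q0 gq gqk.
have hpi z : pi (gh z) = g (pi z) by exact: (congr1 (fun F => F z) pigh).
have hpik k z : pi (iter k gh z) = iter k g (pi z).
  by elim: k => //= k ih; rewrite hpi ih.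
have hTk k r z : iter k gh (T r z) = T r (iter k gh z).
  by elim: k => //= k ih; rewrite ih ghT.
have rhoE h : (forall r z, h (T r z) = T r (h z)) ->
    forall z, rho theta pi h (pi z) = theta (h z) - theta z.
  move=> hT z; rewrite /rho; case: pselect => [e|[]]; last by exists z.
  case: cid => z0 /= e0; have [r ->] := fib z0 z e0.
  by rewrite hT !Tsh opprD addrACA subrr addr0.
have [[xh hx]|nx] := pselect (exists xh, pi xh = x); last first.
  have rho0 h y : ~ (exists z, pi z = y) -> rho theta pi h y = 0.
    by move=> ny; rewrite /rho; case: pselect.
  split.
    exists 0; rewrite (_ : (fun k => _) = fun _ => 0); last first.
      by apply/funext => k; rewrite rho0 // mul0r.
    by rewrite mul0r; exact: cvg_cst.
  move=> mf; apply: (@part2 _ _ _ x _ _ 0) => //.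
  rewrite big1 // => i _; apply: rho0 => -[z hz]; apply: nx.
  exists (iter (q - i) gh z); rewrite hpik hz -iterD subnK //.
  exact: ltnW.
subst x.
have [m hm] : exists m, iter q gh xh = T m xh by apply: fib; rewrite hpik gq.
have hmul a : iter (a * q) gh xh = T (a%:Z * m) xh.
  elim: a => [|a ih]; first by rewrite mul0n /= mul0r T0.
  by rewrite mulSn iterD ih hTk hm -TD intS mulrDl mul1r addrC.
have rhok k : rho theta pi (iter k gh) (pi xh) = theta (iter k gh xh) - theta xh.
  exact: rhoE (hTk k) xh.
split.
  exists m.
  pose e b := theta (iter b gh xh) - theta xh.
  pose S := \sum_(b < q) `|e b|.
  pose C := `|(m%:~R : R)| + S.
  have S0 : 0 <= S by apply: sumr_ge0 => i _.
  have key k : (0 < k)%N ->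
      `|m%:~R / q%:R - rho theta pi (iter k gh) (pi xh) / k%:R| <= C / k%:R.
    move=> k0.
    have hk := divn_eq k q.
    set a := (k %/ q)%N in hk; set b := (k %% q)%N in hk.
    have hb : (b < q)%N by exact: ltn_pmod.
    have hrho : rho theta pi (iter k gh) (pi xh) = a%:R * m%:~R + e b.
      rewrite rhok hk addnC iterD hmul hTk Tsh /e intrM.
      have -> : (a%:Z)%:~R = a%:R :> R by [].
      lra.
    have ebS : `|e b| <= S.
      rewrite /S (bigD1 (Ordinal hb)) //= lerDl.
      by apply: sumr_ge0 => i _.
    have kpos : (0 : R) < k%:R by rewrite ltr0n.
    have qpos : (0 : R) < q%:R by rewrite ltr0n.
    have hkR : (k%:R : R) = a%:R * q%:R + b%:R by rewrite hk natrD natrM.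
    have hid : m%:~R / q%:R - rho theta pi (iter k gh) (pi xh) / k%:R
             = (m%:~R * b%:R / q%:R - e b) / k%:R.
      rewrite hrho; apply: (@mulIf _ k%:R); first by rewrite gt_eqF.
      rewrite mulrBl !divfK ?gt_eqF //.
      rewrite {1}hkR; field; by rewrite gt_eqF.
    rewrite hid normrM [`|k%:R^-1|]ger0_norm; last by rewrite invr_ge0 ler0n.
    apply: ler_wpM2r; first by rewrite invr_ge0 ler0n.
    rewrite /C.
    apply: (le_trans (ler_normB _ _)); apply: lerD => //.
    rewrite -mulrA normrM.
    apply: ler_piMr => //.
    rewrite ger0_norm ?divr_ge0 ?ler0n // ler_pdivrMr // mul1r ler_nat.
    exact: ltnW.
  apply/cvgrPdist_le => eps eps0.
  have := nbhs_infty_ger (Num.max (C / eps) 1); apply: filterS => k.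
  rewrite ge_max => /andP [h1 h2].
  have k0 : (0 < k)%N by rewrite -(ler1n R).
  apply: le_trans (key k k0) _.
  rewrite ler_pdivrMr ?ltr0n // mulrC -ler_pdivrMr //.
move=> mf; apply: (@part2 _ _ _ (pi xh) _ _ m) => //.
rewrite (eq_bigr (fun i : 'I_q => theta (iter i.+1 gh xh) - theta (iter i gh xh))); last first.
  by move=> i _; rewrite -hpik rhoE.
rewrite -(big_mkord xpredT (fun i => theta (iter i.+1 gh xh) - theta (iter i gh xh))).
rewrite telescope_sumr // hm Tsh /=; lra.
Qed.
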